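(* Let $G$ be a finite simple graph on $n$ vertices and $v$ a vertex of $G$ of degree $d$. Then \[\max\{-d,\,-(n-d-1)\}\le \mathrm{mur}(G)-\mathrm{mur}(G\setminus\{v\})\le \min\{d+2,\,(n-d-1)+2\},\] where $G\setminus\{v\}$ is the graph obtained from $G$ by deleting $v$ and its incident edges.
   Context: For a finite simple undirected graph $G$ on vertices $v_1,\dots,v_n$, let $A_G$ be its $(0,1)$-adjacency matrix, $D_G=\mathrm{diag}(d_1,\dots,d_n)$ with $d_i$ the degree of $v_i$, $I$ the $n\times n$ identity matrix and $J$ the $n\times n$ all-ones matrix. A universal adjacency matrix of $G$ is any matrix $\alpha A_G+\beta I+\gamma J+\delta D_G$ with real scalars $\alpha,\beta,\gamma,\delta$ and $\alpha\neq 0$. The minimum universal rank $\mathrm{mur}(G)$ is the minimum rank over all universal adjacency matrices of $G$. *)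

(* Defs.v *)
From HB Require Import structures.
From mathcomp Require Import all_boot all_order all_algebra.
From Stdlib Require Reals.
From mathcomp Require Import boolp Rstruct.
Notation R := Rdefinitions.R.
Set Implicit Arguments. Unset Strict Implicit. Unset Printing Implicit Defensive.
Import Order.TTheory GRing.Theory Num.Theory.
Local Open Scope ring_scope.

Definition simple_graph (T : finType) (e : rel T) : Prop :=
  symmetric e /\ irreflexive e.

Definition deg (T : finType) (e : rel T) (x : T) : nat := #|[set y | e x y]|.

(* Universal adjacency matrix  alpha A + beta I + gamma J + delta D, over the
   real numbers (Stdlib R, a realType via Rstruct), indexed by 'I_#|T|
   through the enumeration of T. *)
Definition univ_adj (T : finType) (e : rel T) (a b c d : R) : 'M[R]_#|T| :=
  \matrix_(i, j)
    (a * (e (enum_val i) (enum_val j))%:R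
     + b * (i == j)%:R
     + c
     + d * (i == j)%:R * (deg e (enum_val i))%:R).

Definition univ_rank (T : finType) (e : rel T) : pred nat :=
  fun r => `[< exists a b c d : R, a != 0 /\ \rank (univ_adj e a b c d) = r >].

Lemma univ_rank_ex (T : finType) (e : rel T) : exists r, univ_rank e r.
Proof. by exists (\rank (univ_adj e 1 0 0 0)); apply/asboolP; exists 1, 0, 0, 0; rewrite oner_eq0. Qed.

Definition mur (T : finType) (e : rel T) : nat := ex_minn (univ_rank_ex e).

Definition del_vertex (T : finType) (e : rel T) (v : T) : rel {x : T | x != v} :=
  fun x y => e (val x) (val y).
Arguments del_vertex [T] e v.

(* Main.v *)
Require Import Defs.
From HB Require Import structures.
From mathcomp Require Import all_boot all_order all_algebra.
From mathcomp Require Import boolp Rstruct ring lra zify.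
Set Implicit Arguments. Unset Strict Implicit. Unset Printing Implicit Defensive.
Import Order.TTheory GRing.Theory Num.Theory.
Local Open Scope ring_scope.

Lemma rank_supp (F : fieldType) m n (A : 'M[F]_(m, n)) (P : {set 'I_m}) :
  (forall i, i \notin P -> row i A = 0) -> (\rank A <= #|P|)%N.
Proof.
move=> H; pose g := fun k : 'I_#|P| => enum_val k.
have sub: (A <= rowsub g A)%MS.
  apply/row_subP => i; case: (boolP (i \in P)) => Pi.
    have -> : row i A = row (enum_rank_in Pi i) (rowsub g A).
      by rewrite row_rowsub /g enum_rankK_in.
    exact: row_sub.
  by rewrite H // sub0mx.
exact: leq_trans (mxrankS sub) (rank_leq_row _).
Qed.

Lemma rank_rowsub_add1 (F : fieldType) m m' n (A : 'M[F]_(m, n))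
  (f : 'I_m' -> 'I_m) i0 :
  (forall i, i != i0 -> exists k, f k = i) ->
  (\rank A <= \rank (rowsub f A) + 1)%N.
Proof.
move=> cov.
have sub: (A <= rowsub f A + row i0 A)%MS.
  apply/row_subP => i; case: (eqVneq i i0) => [->|/cov [k <-]].
    exact: addsmxSr.
  rewrite -row_rowsub; exact: submx_trans (row_sub _ _) (addsmxSl _ _).
apply: leq_trans (mxrankS sub) _.
apply: leq_trans (mxrank_adds_leqif _ _).1 _.
by rewrite leq_add2l rank_leq_row.
Qed.

Lemma tr_colsub' (F : fieldType) m n n' (A : 'M[F]_(m, n)) (f : 'I_n' -> 'I_n) :
  (colsub f A)^T = rowsub f A^T.
Proof. by apply/matrixP => i j; rewrite !mxE. Qed.

Lemma rank_mxsub_add2 (F : fieldType) m m' (A : 'M[F]_m)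
  (f : 'I_m' -> 'I_m) i0 :
  (forall i, i != i0 -> exists k, f k = i) ->
  (\rank A <= \rank (mxsub f f A) + 2)%N.
Proof.
move=> cov.
have -> : mxsub f f A = colsub f (rowsub f A) by apply/matrixP => i j; rewrite !mxE.
apply: leq_trans (rank_rowsub_add1 A cov) _.
rewrite -(mxrank_tr (colsub f _)) tr_colsub' -(mxrank_tr (rowsub f A)).
have := rank_rowsub_add1 (rowsub f A)^T cov; lia.
Qed.

Lemma rank_mxsub_le (F : fieldType) m m' (A : 'M[F]_m) (f : 'I_m' -> 'I_m) :
  (\rank (mxsub f f A) <= \rank A)%N.
Proof.
have -> : mxsub f f A = colsub f (rowsub f A) by apply/matrixP => i j; rewrite !mxE.
rewrite -mxrank_tr tr_colsub'.
apply: leq_trans (mxrankS (rowsub_sub _ _)) _.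
by rewrite mxrank_tr; apply: mxrankS; apply: rowsub_sub.
Qed.

Definition fsub (T : finType) (v : T) (k : 'I_#|{: {x : T | x != v}}|) : 'I_#|T| :=
  enum_rank (val (enum_val k)).

Lemma fsub_cover (T : finType) (v : T) i :
  i != enum_rank v -> exists k, @fsub T v k = i.
Proof.
move=> H; have xv : enum_val i != v.
  by apply: contra H => /eqP <-; rewrite enum_valK.
exists (enum_rank (Sub (enum_val i) xv : {x : T | x != v})).
by rewrite /fsub enum_rankK SubK enum_valK.
Qed.

Lemma univ_adj_E (T : finType) (e : rel T) a b c d (x y : T) :
  univ_adj e a b c d (enum_rank x) (enum_rank y) =
  a * (e x y)%:R + b * (x == y)%:R + c + d * (x == y)%:R * (deg e x)%:R.
Proof. by rewrite /univ_adj mxE !enum_rankK (inj_eq enum_rank_inj). Qed.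

Lemma card_sub_set (T : finType) (v : T) (P : pred T) : ~~ P v ->
  #|[set y : T | P y]| = #|[set y : {x : T | x != v} | P (val y)]|.
Proof.
move=> Pv; rewrite -(card_imset _ val_inj); apply: eq_card => y.
rewrite inE; case: (eqVneq y v) => [->|yv].
  rewrite (negbTE Pv); apply/esym/negbTE/imsetP => -[z]; rewrite inE => _ zv.
  by move: (valP z); rewrite -zv eqxx.
apply/idP/imsetP => [Py|[z]].
  by exists (Sub y yv); rewrite ?inE ?SubK.
by rewrite inE => Pz ->.
Qed.

Lemma deg_del (T : finType) (e : rel T) (v : T) (x : {x : T | x != v}) :
  deg e (val x) = (deg (del_vertex e v) x + e (val x) v)%N.
Proof.
rewrite /deg (cardsD1 v) inE addnC; congr (_ + _)%N.
have -> : [set y | e (val x) y] :\ v = [set y | e (val x) y && (y != v)].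
  by apply/setP => y; rewrite !inE andbC.
rewrite (@card_sub_set _ v (fun y => e (val x) y && (y != v))) ?eqxx ?andbF //.
by apply: eq_card => y; rewrite !inE (valP y) andbT.
Qed.

Lemma card_enum_pre (S : finType) (Q : pred S) :
  #|[set k : 'I_#|S| | Q (enum_val k)]| = #|[set y | Q y]|.
Proof.
rewrite -(card_imset _ (@enum_rank_inj S)); apply: eq_card => k.
rewrite inE; apply/idP/imsetP => [Qk|[y]].
  by exists (enum_val k); rewrite ?inE ?enum_valK.
by rewrite inE => Qy ->; rewrite enum_rankK.
Qed.

Definition nb (T : finType) (e : rel T) (v : T) (k : 'I_#|{: {x : T | x != v}}|) : bool :=
  e (val (enum_val k)) v.
Arguments nb {T} e v k.

Lemma card_nb (T : finType) (e : rel T) (v : T) : simple_graph e ->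
  #|[set k | nb e v k]| = deg e v.
Proof.
case=> sym irr; rewrite /nb (card_enum_pre (fun y : {x : T | x != v} => e (val y) v)).
rewrite /deg (@card_sub_set _ v (e v)) ?irr //.
by apply: eq_card => y; rewrite !inE sym.
Qed.

Lemma card_nnb (T : finType) (e : rel T) (v : T) : simple_graph e ->
  #|[set k | ~~ nb e v k]| = (#|T| - deg e v - 1)%N.
Proof.
move=> sg; have h1 := card_nb v sg.
have h2 := cardsCs [set k | nb e v k].
have e2 : ~: [set k | nb e v k] = [set k | ~~ nb e v k] by apply/setP => k; rewrite !inE.
rewrite e2 in h2.
have h3 : (#|[set k | ~~ nb e v k]| <= #|'I_#|{: {x : T | x != v}}| |)%N := max_card _.
have hS : #|'I_#|{: {x : T | x != v}}| | = (#|T| - 1)%N.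
  rewrite card_ord card_sig subn1.
  have -> : #|[pred x | x != v]| = #|predC1 v| by [].
  by rewrite cardC1.
rewrite hS in h2 h3; lia.
Qed.

Definition Dg (T : finType) (v : T) (c : R) (P : pred 'I_#|{: {x : T | x != v}}|) :
  'M[R]_#|{: {x : T | x != v}}| :=
  \matrix_(k, l) (c * (k == l)%:R * (P k)%:R).
Arguments Dg {T} v c P.

Lemma rank_Dg (T : finType) (v : T) c P : (\rank (Dg v c P) <= #|[set k | P k]|)%N.
Proof.
apply: rank_supp => i; rewrite inE => /negbTE Pi.
by apply/rowP => j; rewrite !mxE Pi mulr0.
Qed.

Lemma N_entry (T : finType) (e : rel T) (v : T) a b c d k l :
  mxsub (@fsub T v) (@fsub T v) (univ_adj e a b c d) k l =
  univ_adj (del_vertex e v) a b c d k l + d * (k == l)%:R * (nb e v k)%:R.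
Proof.
rewrite mxE /fsub univ_adj_E /univ_adj mxE.
rewrite (inj_eq val_inj) (inj_eq enum_val_inj) deg_del natrD /nb /del_vertex.
ring.
Qed.

Lemma univ_rank_of (T : finType) (e : rel T) a b c d : a != 0 ->
  (mur e <= \rank (univ_adj e a b c d))%N.
Proof.
move=> a0; rewrite /mur; case: ex_minnP => r _; apply.
by apply/asboolP; exists a, b, c, d.
Qed.

Lemma mur_spec (T : finType) (e : rel T) :
  exists a b c d, a != 0 /\ \rank (univ_adj e a b c d) = mur e.
Proof.
rewrite /mur; case: ex_minnP => r /asboolP H _; exact: H.
Qed.

Lemma arith (m m' dd k : nat) : (m' <= m + dd)%N -> (m' <= m + k)%N ->
  (m <= m' + dd + 2)%N -> (m <= m' + k + 2)%N ->
  Num.max (- (dd%:Z)) (- (k%:Z)) <= m%:Z - m'%:Z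
  /\ m%:Z - m'%:Z <= Num.min (dd%:Z + 2) (k%:Z + 2).
Proof.
move=> H1 H2 H3 H4.
rewrite ge_max le_min; split; apply/andP; split; lia.
Qed.

Theorem corollary18 (T : finType) (e : rel T) (v : T) :
  simple_graph e ->
  let n := #|T| in let d := deg e v in
  Num.max (- (d%:Z)) (- ((n - d - 1)%N%:Z)) <= (mur e)%:Z - (mur (del_vertex e v))%:Z
  /\ (mur e)%:Z - (mur (del_vertex e v))%:Z <= Num.min (d%:Z + 2) ((n - d - 1)%N%:Z + 2).
Proof.
move=> sg n dd.
have cnb := card_nb v sg; have cnnb := card_nnb v sg.
set e' := del_vertex e v.
have cov := @fsub_cover T v.
have [a [b [c [d [a0 rk]]]]] := mur_spec e.
set N := mxsub (@fsub T v) (@fsub T v) (univ_adj e a b c d).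
have rN : (\rank N <= mur e)%N by rewrite -rk rank_mxsub_le.
have H1 : (mur e' <= mur e + dd)%N.
  apply: leq_trans (univ_rank_of e' b c d a0) _.
  have -> : univ_adj e' a b c d = N + Dg v (- d) (nb e v).
    apply/matrixP => k l; rewrite /Dg [in RHS]mxE N_entry !mxE; ring.
  apply: leq_trans (mxrank_add _ _) _; apply: leq_add => //.
  by apply: leq_trans (@rank_Dg T v _ _) _; rewrite cnb /dd.
have H2 : (mur e' <= mur e + (n - dd - 1))%N.
  apply: leq_trans (univ_rank_of e' (b + d) c d a0) _.
  have -> : univ_adj e' a (b + d) c d = N + Dg v d (fun k => ~~ nb e v k).
    apply/matrixP => k l; rewrite /Dg [in RHS]mxE N_entry !mxE.
    case: (nb e v k) => /=; ring.
  apply: leq_trans (mxrank_add _ _) _; apply: leq_add => //.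
  by apply: leq_trans (@rank_Dg T v _ _) _; rewrite cnnb /dd /n.
have [a' [b' [c' [d' [a0' rk']]]]] := mur_spec e'.
have H3 : (mur e <= mur e' + dd + 2)%N.
  apply: leq_trans (univ_rank_of e b' c' d' a0') _.
  apply: leq_trans (rank_mxsub_add2 _ cov) _; rewrite leq_add2r.
  have -> : mxsub (@fsub T v) (@fsub T v) (univ_adj e a' b' c' d') =
            univ_adj e' a' b' c' d' + Dg v d' (nb e v).
    apply/matrixP => k l; rewrite /Dg N_entry [in RHS]mxE [Dg _ _ _ _ _]mxE //.
  apply: leq_trans (mxrank_add _ _) _; rewrite rk'; apply: leq_add => //.
  by apply: leq_trans (@rank_Dg T v _ _) _; rewrite cnb /dd.
have H4 : (mur e <= mur e' + (n - dd - 1) + 2)%N.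
  apply: leq_trans (univ_rank_of e (b' - d') c' d' a0') _.
  apply: leq_trans (rank_mxsub_add2 _ cov) _; rewrite leq_add2r.
  have -> : mxsub (@fsub T v) (@fsub T v) (univ_adj e a' (b' - d') c' d') =
            univ_adj e' a' b' c' d' + Dg v (- d') (fun k => ~~ nb e v k).
    apply/matrixP => k l; rewrite /Dg N_entry !mxE.
    case: (nb e v k) => /=; ring.
  apply: leq_trans (mxrank_add _ _) _; rewrite rk'; apply: leq_add => //.
  by apply: leq_trans (@rank_Dg T v _ _) _; rewrite cnnb /dd /n.
exact: arith H1 H2 H3 H4.
Qed.
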